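(* The equation $$p^{\alpha-2}(p^2-1)=q^{\beta-2}(q^2-1)$$ in integers $\alpha,\beta$ and primes $p<q$ has only finitely many solutions $(p,\alpha,q,\beta)$, namely exactly $(2,5,3,3)$, $(2,5,5,2)$, $(2,6,7,2)$, $(3,3,5,2)$ and $(5,3,11,2)$. *)

(* Defs.v *)
From mathcomp Require Import all_boot all_order all_algebra.

(* Main.v *)
Require Import Defs.
From mathcomp Require Import all_boot all_order all_algebra zify.
Import GRing.Theory Num.Theory.

Lemma two_case q m : prime q -> 2 < q -> 2^m * 3 = q * q - 1 ->
  (m = 3 /\ q = 5) \/ (m = 4 /\ q = 7).
Proof.
move=> pq q2 E.
have oq : odd q by case: (even_prime pq) => // e; rewrite e in q2.
have [r hq] : exists r, q = 2 * r + 1.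
  by exists q./2; have := odd_double_half q; rewrite oq -muln2; lia.
have r1 : 1 <= r by lia.
case: m E => [|[|m']] E; first (by nia); first (by nia).
rewrite !expnS in E.
set X := 2 ^ m' in E.
have E2 : r * (r + 1) = 3 * X by nia.
have Xpos : 0 < X by rewrite expn_gt0.
have X2 : forall k, X = 2 ^ k -> m' = k.
  by move=> k /eqP; rewrite /X eqn_exp2l // => /eqP.
case: (boolP (odd r)) => or.
- have cr : coprime r X by rewrite coprimeXr // coprimen2.
  have : r %| 3 by rewrite -(Gauss_dvdl _ cr) -E2 dvdn_mulr.
  move=> d3; have := dvdn_leq (isT : 0 < 3) d3.
  case: r or E2 hq d3 {r1 cr} => [|[|[|[|]]]] //= _ E2 hq _ _.
  + lia.
  + have -> : m' = 2 by apply: X2; lia.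
    right; lia.
- have cr : coprime (r + 1) X by rewrite coprimeXr // coprimen2 addn1 /= or.
  have : r + 1 %| 3 by rewrite -(Gauss_dvdl _ cr) -E2 dvdn_mull.
  move=> d3; have := dvdn_leq (isT : 0 < 3) d3.
  case: r or E2 hq d3 r1 {cr} => [|[|[|[|]]]] //= _ E2 hq _ _ _.
  have -> : m' = 1 by apply: X2; lia.
  left; lia.
Qed.

Lemma plus_big p q k R : 3 <= p -> 3 <= q -> 1 <= R -> q + 1 = k * (p * p * R) ->
  p * p = k * (q - 1) + 1 -> False.
Proof.
move=> *.
have [k0|k1] : (k = 0 \/ 1 <= k) by lia. subst; lia.
have [k2|k2] : (k = 1 \/ 2 <= k) by lia. subst.
have [R2|R2] : (R = 1 \/ 2 <= R) by lia. subst. lia.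
have : p * p * 2 <= p * p * R by nia. nia.
have : k * (p * p) <= k * (p * p * R) by nia. nia.
Qed.

Lemma odd_case p q m : prime p -> prime q -> 2 < p -> p < q ->
  p ^ m * (p * p - 1) = q * q - 1 ->
  (p = 3 /\ m = 1 /\ q = 5) \/ (p = 5 /\ m = 1 /\ q = 11).
Proof.
move=> pp pq p2 pltq E.
case: m E => [|m'] E; first by rewrite expn0 in E; nia.
have [P hP] : {P | P = p ^ m'.+1} by exists (p ^ m'.+1).
rewrite -hP in E.
have Ppos : 0 < P by rewrite hP expn_gt0 prime_gt0.
have hdiv : P %| (q - 1) * (q + 1) by apply/dvdnP; exists (p * p - 1); nia.
have PR : (m' = 0 /\ P = p) \/ exists R, 1 <= R /\ P = p * p * R.
  case: m' hP {E hdiv} => [|m''] hP; first by left; rewrite hP expn1.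
  right; exists (p ^ m''); rewrite expn_gt0 prime_gt0 //; split => //.
  by rewrite hP !expnS mulnA.
have twocase : forall k, k * k * p = p * p + 2 * k - 1 -> p + 1 <= 2 * k -> p = 3 /\ k = 2.
  move=> k hk hk2; have : p <= 3 by nia.
  move=> p3; have ep : p = 3 by lia.
  rewrite ep in hk; split => //; nia.
case: (boolP (p %| q - 1)) => hp.
- have hp' : ~~ (p %| q + 1).
    apply/negP => hp'; have := dvdn_sub hp' hp.
    have -> : q + 1 - (q - 1) = 2 by lia.
    move/(dvdn_leq (isT : 0 < 2)); lia.
  have cP : coprime P (q + 1) by rewrite hP coprimeXl // prime_coprime.
  move: hdiv; rewrite Gauss_dvdl // => /dvdnP [k hk].
  have E2 : p * p - 1 = k * (q + 1).
    apply/eqP; rewrite -(eqn_pmul2l Ppos); apply/eqP; nia.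
  case: PR => [[m0 eP]|[R [R1 eP]]]; last first.
    move: hk E2; case: k => [|k] hk E2; first lia.
    have h1 : P <= q - 1 by rewrite hk leq_pmull.
    have h2 : q + 1 <= k.+1 * (q + 1) by rewrite leq_pmull.
    have h3 : p * p <= P by rewrite eP leq_pmulr.
    lia.
  rewrite eP in hk.
  have E3 : k * k * p + (2 * k + 1) = p * p by nia.
  have : p %| 2 * k + 1 by rewrite -(@dvdn_addr (k * k * p) p (2 * k + 1) (dvdn_mull (k * k) (dvdnn p))) E3 dvdn_mull.
  move=> hd; have hle : p <= 2 * k + 1 by apply: dvdn_leq hd; lia.
  have p5 : p <= 5 by clear -E3 hle p2; nia.
  have : (p == 3) || (p == 5).
    clear -pp p2 p5; by move: pp p2 p5; case: p => [|[|[|[|[|[|]]]]]].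
  case/orP => /eqP ep; rewrite ep in E3 hk.
  + clear -E3; nia.
  + have ek : k = 2 by clear -E3; nia.
    right; subst; lia.
- have cP : coprime P (q - 1) by rewrite hP coprimeXl // prime_coprime.
  move: hdiv; rewrite Gauss_dvdr // => /dvdnP [k hk].
  have E2 : p * p - 1 = k * (q - 1).
    apply/eqP; rewrite -(eqn_pmul2l Ppos); apply/eqP; nia.
  case: PR => [[m0 eP]|[R [R1 eP]]]; last first.
    have : q + 1 = k * (p * p * R) by rewrite -eP.
    move=> {}hk; exfalso; apply: (plus_big p q k R) => //; lia.
  rewrite eP in hk.
  have k1 : 1 <= k by clear -hk p2 pltq; nia.
  have E3 : k * k * p = p * p + (2 * k - 1) by clear -hk E2 k1 p2 pltq; nia.
  have : p %| 2 * k - 1 by rewrite -(@dvdn_addr (p * p) p (2 * k - 1) (dvdn_mull p (dvdnn p))) -E3 dvdn_mull.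
  move=> hd; have hle : p <= 2 * k - 1 by apply: dvdn_leq hd; lia.
  have [ep ek] := twocase k ltac:(lia) ltac:(lia).
  left; subst; lia.
Qed.

Lemma nat_main p q m n : prime p -> prime q -> p < q ->
  p ^ m * (p ^ 2 - 1) = q ^ n * (q ^ 2 - 1) ->
  (p, m, q, n) = (2, 3, 3, 1) \/ (p, m, q, n) = (2, 3, 5, 0) \/
      (p, m, q, n) = (2, 4, 7, 0) \/ (p, m, q, n) = (3, 1, 5, 0) \/
      (p, m, q, n) = (5, 1, 11, 0).
Proof.
move=> pp pq pltq E.
have p1 := prime_gt1 pp.
rewrite -!mulnn in E.
case: n E => [|n'] E.
- rewrite expn0 mul1n in E.
  case: (even_prime pp) => [ep|op].
  + subst p.
    by case: (two_case q m pq pltq E)=> [[-> ->]|[-> ->]]; [right; left | right; right; left].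
  + have p2 : 2 < p by move: op p1; case: p {E pltq pp} => [|[|[|]]].
    by case: (odd_case p q m pp pq p2 pltq E) => [[-> [-> ->]]|[-> [-> ->]]];
      [right; right; right; left | right; right; right; right].
- have hq : q %| p ^ m * (p * p - 1) by rewrite E expnS -mulnA dvdn_mulr.
  have hq2 : q %| (p - 1) * (p + 1).
    move: hq; rewrite Euclid_dvdM // Euclid_dvdX // => /orP [/andP [hq _]|hq].
      by have := dvdn_leq (prime_gt0 pp) hq; lia.
    by have -> : (p - 1) * (p + 1) = p * p - 1 by nia.
  have eq1 : q = p + 1.
    move: hq2; rewrite Euclid_dvdM // => /orP [] hd.
      by have := dvdn_leq (_ : 0 < p - 1) hd; lia.
    by have := dvdn_leq (_ : 0 < p + 1) hd; lia.
  have ep : p = 2.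
    case: (even_prime pp) => // op.
    case: (even_prime pq) => oq; first lia.
    by rewrite eq1 addn1 /= op in oq.
  have eq3 : q = 3 by lia.
  clear eq1; subst q p.
  case: n' E => [|n''] E.
  + have : 2 ^ m = 2 ^ 3 by move: E; rewrite expn1 /=; lia.
    by move/eqP; rewrite eqn_exp2l // => /eqP ->; left.
  + exfalso.
    have : 3 %| 2 ^ m.
      apply/dvdnP; exists (3 ^ n'' * 8); move: E; rewrite !expnS /=; lia.
    by rewrite Euclid_dvdX.
Qed.

Section RatPart.
Local Open Scope ring_scope.

Lemma nat_sq1 {p : nat} : prime p -> (p%:R : rat) ^+ 2 - 1 = ((p ^ 2 - 1)%N)%:R.
Proof.
move=> pp; rewrite natrB ?natrX // expn_gt0 prime_gt0 //.
Qed.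

Lemma ndiv_sq1 {p : nat} : prime p -> ~~ (p %| p ^ 2 - 1)%N.
Proof.
move=> pp; apply/negP => h.
have h2 : (p %| p ^ 2)%N by rewrite dvdn_exp.
have := dvdn_sub h2 h.
have -> : (p ^ 2 - (p ^ 2 - 1) = 1)%N.
  have : (0 < p ^ 2)%N by rewrite expn_gt0 prime_gt0.
  lia.
by rewrite dvdn1 => /eqP e; rewrite e in pp.
Qed.

Lemma invE {x a b : rat} : x != 0 -> x^-1 * a = b -> a = x * b.
Proof. by move=> x0 <-; rewrite mulrA mulfV ?mul1r. Qed.

Lemma natX_neq0 {p : nat} (k : nat) : prime p -> (p%:R : rat) ^+ k != 0.
Proof. by move=> pp; rewrite -natrX pnatr_eq0 -lt0n expn_gt0 prime_gt0. Qed.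

Lemma rat_nat p q (a b : int) : prime p -> prime q -> p != q ->
  (p%:R : rat) ^ a * ((p%:R : rat) ^+ 2 - 1) = (q%:R : rat) ^ b * ((q%:R : rat) ^+ 2 - 1) ->
  exists m n : nat, a = m /\ b = n /\ (p ^ m * (p ^ 2 - 1) = q ^ n * (q ^ 2 - 1))%N.
Proof.
move=> pp pq pnq.
rewrite (nat_sq1 pp) (nat_sq1 pq).
have nP := ndiv_sq1 pp; have nQ := ndiv_sq1 pq.
case: a => m; case: b => n /= H; rewrite /exprz in H.
- exists m, n; split => //; split => //.
  by apply/eqP; rewrite -(eqr_nat rat) !natrM !natrX H.
- exfalso.
  have H' := invE (natX_neq0 n.+1 pq) (esym H).
  have : ((q ^ n.+1 * (p ^ m * (p ^ 2 - 1)))%N = (q ^ 2 - 1)%N).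
    by apply/eqP; rewrite -(eqr_nat rat) !natrM !natrX H'.
  move=> e; move: nQ; rewrite -e expnS -mulnA dvdn_mulr //.
- exfalso.
  have H' := invE (natX_neq0 m.+1 pp) H.
  have : ((p ^ 2 - 1)%N = p ^ m.+1 * (q ^ n * (q ^ 2 - 1)))%N.
    by apply/eqP; rewrite -(eqr_nat rat) !natrM !natrX H'.
  move=> e; move: nP; rewrite e expnS -mulnA dvdn_mulr //.
- exfalso.
  have H' := invE (natX_neq0 m.+1 pp) H.
  rewrite mulrCA in H'.
  have H'' := invE (natX_neq0 n.+1 pq) (esym H').
  have e : ((q ^ n.+1 * (p ^ 2 - 1))%N = (p ^ m.+1 * (q ^ 2 - 1))%N).
    by apply/eqP; rewrite -(eqr_nat rat) !natrM !natrX H'' mulrC.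
  have : (p %| q ^ n.+1 * (p ^ 2 - 1))%N by rewrite e expnS -mulnA dvdn_mulr.
  rewrite Euclid_dvdM // Euclid_dvdX // dvdn_prime2 // (negbTE pnq) /=.
  by rewrite (negbTE nP).
Qed.

End RatPart.

Local Open Scope ring_scope.

Theorem proposition1 (p q : nat) (alpha beta : int) :
  prime p -> prime q -> (p < q)%N ->
  ((p%:R : rat) ^ (alpha - 2) * ((p%:R : rat) ^+ 2 - 1)
     = (q%:R : rat) ^ (beta - 2) * ((q%:R : rat) ^+ 2 - 1)
   <->
   (p, alpha, q, beta) = (2%N, 5%Z, 3%N, 3%Z) \/
       (p, alpha, q, beta) = (2%N, 5%Z, 5%N, 2%Z) \/
       (p, alpha, q, beta) = (2%N, 6%Z, 7%N, 2%Z) \/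
       (p, alpha, q, beta) = (3%N, 3%Z, 5%N, 2%Z) \/
       (p, alpha, q, beta) = (5%N, 3%Z, 11%N, 2%Z)).
Proof.
move=> pp pq pltq; split.
- move=> H.
  have pnq : p != q by rewrite neq_ltn pltq.
  have [m [n [ea [eb E]]]] := rat_nat _ _ _ _ pp pq pnq H.
  have ea' : alpha = (m + 2)%N :> int by rewrite PoszD -ea subrK.
  have eb' : beta = (n + 2)%N :> int by rewrite PoszD -eb subrK.
  rewrite ea' eb'.
  by case: (nat_main _ _ _ _ pp pq pltq E) =>
    [[-> -> -> ->]|[[-> -> -> ->]|[[-> -> -> ->]|[[-> -> -> ->]|[-> -> -> ->]]]]];
    [left|right;left|right;right;left|right;right;right;left|right;right;right;right].
- by case=> [[-> -> -> ->]|[[-> -> -> ->]|[[-> -> -> ->]|[[-> -> -> ->]|[-> -> -> ->]]]]];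
    apply/eqP; vm_compute.
Qed.
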